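(* Let $k\in\mathbb N$ with $k\geq 3$. The family of sets $R_{i,j}$ with $i\in\{k-3,k-2\}$ and $j\in\mathbb Z$ satisfying $-F(i+1)\geq j\geq 1-F(k)$ (the $k$-th standard Fibonacci-like partition of the second kind) consists of $F(k)$ sets which are pairwise disjoint and whose union is $\{n\in\mathbb N\mid n\geq F(k)\}$.
   Context: $\mathbb N=\{1,2,\dots\}$, $\varphi=\frac{1+\sqrt5}{2}$, $a(n)=\lfloor n\varphi\rfloor$. $F$ is the Fibonacci sequence with $F(0)=0$, $F(1)=F(2)=1$, $F(n)=F(n-1)+F(n-2)$. For $i\in\mathbb Z^{\geq 0}$, $j\in\mathbb Z$: $f_{i,j}(n)=F(i+1)a(n)+F(i)n-j$ ($n\in\mathbb N$) and $R_{i,j}=\{f_{i,j}(n)\mid n\in\mathbb N\}$. *)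

(* Defs.v *)
From Stdlib Require Import Reals ZArith List Lia Lra.
Open Scope Z_scope.

Definition phi : R := ((1 + sqrt 5) / 2)%R.

(* a(n) = floor(n * phi); Int_part is the floor function on R *)
Definition a (n : nat) : Z := Int_part (INR n * phi).

Fixpoint F (n : nat) : Z :=
  match n with
  | O => 0
  | S O => 1
  | S ((S m) as p) => F p + F m
  end.

Definition f (i : nat) (j : Z) (n : nat) : Z :=
  F (S i) * a n + F i * Z.of_nat n - j.

Definition Rij (i : nat) (j : Z) (m : Z) : Prop :=
  exists n : nat, (1 <= n)%nat /\ m = f i j n.

Definition idx (k : nat) (p : nat * Z) : Prop :=
  (fst p = (k - 3)%nat \/ fst p = (k - 2)%nat) /\
  1 - F k <= snd p <= - F (S (fst p)).

(* Main.v *)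
Require Import Defs.
From Stdlib Require Import Reals ZArith List Lia Lra Psatz.
Open Scope Z_scope.

Lemma Int_part_unique (r : R) (z : Z) : (IZR z <= r < IZR z + 1)%R -> Int_part r = z.
Proof.
  intros [H1 H2]. destruct (base_Int_part r) as [B1 B2].
  assert (h1 : z - 1 < Int_part r). { apply lt_IZR. rewrite minus_IZR. lra. }
  assert (h2 : Int_part r < z + 1). { apply lt_IZR. rewrite plus_IZR. lra. }
  lia.
Qed.

Lemma phi_sq : (phi * phi = phi + 1)%R.
Proof.
  unfold phi. pose proof (sqrt_sqrt 5 ltac:(lra)). nra.
Qed.

Lemma phi_bounds : (1.6 < phi < 1.625)%R.
Proof.
  unfold phi. pose proof (sqrt_sqrt 5 ltac:(lra)). pose proof (sqrt_pos 5). nra.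
Qed.

Lemma mul5 : forall k n, k*k = 5*n -> exists q, k = 5*q.
Proof.
  intros k n H. pose proof (Z.div_mod k 5 ltac:(lia)). pose proof (Z.mod_pos_bound k 5 ltac:(lia)).
  set (q := k / 5) in *. set (r := k mod 5) in *.
  assert (r=0\/r=1\/r=2\/r=3\/r=4) as Hr by lia.
  rewrite H0 in H.
  destruct Hr as [E|[E|[E|[E|E]]]]; rewrite E in H, H0.
  - exists q; lia.
  - exfalso. nia.
  - exfalso. nia.
  - exfalso. nia.
  - exfalso. nia.
Qed.

Lemma no_sqrt5 : forall N:nat, forall k n : Z, Z.abs n <= Z.of_nat N -> k*k = 5*(n*n) -> n = 0.
Proof.
  induction N; intros k n Hn H.
  - lia.
  - destruct (Z.eq_dec n 0) as [|Hn0]; [assumption|].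
    destruct (mul5 k (n*n) H) as [q Hq]. subst k.
    assert (H2 : n*n = 5*(q*q)) by nia.
    destruct (mul5 n (q*q) H2) as [q' Hq']. subst n.
    assert (H3 : q*q = 5*(q'*q')) by nia.
    assert (Z.abs q' <= Z.of_nat N) by lia.
    pose proof (IHN q q' H0 H3). lia.
Qed.

Lemma irr (n:nat) (N:Z) : (1 <= n)%nat -> (INR n * phi <> IZR N)%R.
Proof.
  intros Hn E. unfold phi in E. pose proof (sqrt_sqrt 5 ltac:(lra)) as S5.
  set (s := sqrt 5) in *.
  rewrite INR_IZR_INZ in E.
  assert (E2 : (IZR (Z.of_nat n) * s = 2 * IZR N - IZR (Z.of_nat n))%R) by (rewrite <- E; field).
  assert (E3 : IZR (5 * (Z.of_nat n * Z.of_nat n)) = IZR ((2*N - Z.of_nat n) * (2*N - Z.of_nat n))).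
  { rewrite !mult_IZR, !minus_IZR, mult_IZR. rewrite <- E2.
    replace (IZR 5) with (s*s)%R by (rewrite S5; reflexivity). ring. }
  apply eq_IZR in E3.
  pose proof (no_sqrt5 (Z.to_nat (Z.abs (Z.of_nat n))) _ (Z.of_nat n) ltac:(lia) (eq_sym E3)). lia.
Qed.

Definition xf (n : nat) : R := (INR n * phi - IZR (a n))%R.

Lemma xf_bounds n : (0 <= xf n < 1)%R.
Proof.
  unfold xf, a. destruct (base_Int_part (INR n * phi)). lra.
Qed.

Lemma xf_pos n : (1 <= n)%nat -> (0 < xf n)%R.
Proof.
  intros Hn. destruct (xf_bounds n). destruct (Rle_lt_or_eq_dec _ _ H); [assumption|].
  exfalso. apply (irr n (a n) Hn). unfold xf in e. lra.
Qed.

Lemma a_def n : IZR (a n) = (INR n * phi - xf n)%R.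
Proof. unfold xf. ring. Qed.

Lemma a_ge n : Z.of_nat n <= a n.
Proof.
  destruct (Z_lt_le_dec (a n) (Z.of_nat n)); [|assumption]. exfalso.
  pose proof (xf_bounds n). pose proof (a_def n). pose proof phi_bounds.
  assert (IZR (a n + 1) <= IZR (Z.of_nat n))%R by (apply IZR_le; lia).
  rewrite plus_IZR, <- INR_IZR_INZ in H2. pose proof (pos_INR n). nra.
Qed.

Lemma a_step1 n : (xf n + phi < 2)%R -> a (S n) = a n + 1.
Proof.
  intros H. unfold a at 1. apply Int_part_unique. rewrite plus_IZR, S_INR, a_def.
  pose proof (xf_bounds n). pose proof phi_bounds. split; nra.
Qed.

Lemma a_step2 n : (2 <= xf n + phi)%R -> a (S n) = a n + 2.
Proof.
  intros H. unfold a at 1. apply Int_part_unique. rewrite plus_IZR, S_INR, a_def.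
  pose proof (xf_bounds n). pose proof phi_bounds. split; nra.
Qed.

Lemma a_one : a 1 = 1.
Proof.
  unfold a. apply Int_part_unique. simpl. pose proof phi_bounds. lra.
Qed.

Lemma a_nonneg n : 0 <= a n.
Proof. pose proof (a_ge n). lia. Qed.

Lemma INR_toZ (m : Z) : 0 <= m -> INR (Z.to_nat m) = IZR m.
Proof. intros. rewrite INR_IZR_INZ, Z2Nat.id; auto. Qed.

Lemma a_aa n : (1 <= n)%nat -> a (Z.to_nat (a n)) = a n + Z.of_nat n - 1.
Proof.
  intros Hn. unfold a at 1. apply Int_part_unique.
  rewrite INR_toZ by apply a_nonneg.
  rewrite minus_IZR, plus_IZR, <- INR_IZR_INZ, a_def.
  pose proof (xf_pos n Hn). pose proof (xf_bounds n). pose proof phi_bounds.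
  set (x := xf n) in *. set (rn := INR n) in *.
  assert (E : ((rn*phi - x)*phi = rn*phi - x + rn - x*(phi-1))%R).
  { replace ((rn*phi - x)*phi)%R with (rn*(phi*phi) - x*phi)%R by ring. rewrite phi_sq. ring. }
  rewrite E.
  assert (0 < x*(phi-1))%R by (apply Rmult_lt_0_compat; lra).
  assert (x*(phi-1) < 1)%R by nra.
  split; lra.
Qed.

Lemma a_aa1 n : (1 <= n)%nat -> a (S (Z.to_nat (a n))) = a n + Z.of_nat n + 1.
Proof.
  intros Hn. unfold a at 1. apply Int_part_unique.
  rewrite S_INR, INR_toZ by apply a_nonneg.
  rewrite plus_IZR, plus_IZR, <- INR_IZR_INZ, a_def.
  pose proof (xf_pos n Hn). pose proof (xf_bounds n). pose proof phi_bounds.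
  set (x := xf n) in *. set (rn := INR n) in *.
  assert (E : ((rn*phi - x + 1)*phi = rn*phi - x + rn - x*(phi-1) + phi)%R).
  { replace ((rn*phi - x + 1)*phi)%R with (rn*(phi*phi) - x*phi + phi)%R by ring. rewrite phi_sq. ring. }
  rewrite E.
  assert (0 < x*(phi-1))%R by (apply Rmult_lt_0_compat; lra).
  assert (x*(phi-1) < phi - 1)%R by nra.
  split; lra.
Qed.

Lemma a_step (n : nat) : a (S n) = a n + 1 \/ a (S n) = a n + 2.
Proof.
  destruct (Rlt_le_dec (xf n + phi) 2); [left; apply a_step1 | right; apply a_step2]; auto.
Qed.

Lemma a_gap n : (1 <= n)%nat -> a (S n) = a n + 2 -> exists n', (1 <= n')%nat /\ Z.of_nat n = a n'.
Proof.
  intros Hn H.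
  assert (Hx : (2 < xf n + phi)%R).
  { destruct (Rlt_le_dec (xf n + phi) 2) as [h|h].
    - rewrite (a_step1 n h) in H. lia.
    - destruct (Rle_lt_or_eq_dec _ _ h) as [h'|h']; [assumption|].
      exfalso. apply (irr (S n) (a n + 2) ltac:(lia)).
      rewrite S_INR, plus_IZR, a_def. lra. }
  pose proof (a_ge n).
  exists (Z.to_nat (a n - Z.of_nat n + 1)). split; [lia|].
  symmetry. unfold a at 1. apply Int_part_unique.
  rewrite INR_toZ by lia.
  rewrite plus_IZR, minus_IZR, <- INR_IZR_INZ, a_def.
  pose proof (xf_bounds n). pose proof phi_bounds.
  set (x := xf n) in *. set (rn := INR n) in *.
  assert (E : ((rn*phi - x - rn + 1)*phi = rn + phi*(1-x))%R).
  { replace ((rn*phi - x - rn + 1)*phi)%R with (rn*(phi*phi) - x*phi - rn*phi + phi)%R by ring.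
    rewrite phi_sq. ring. }
  rewrite E.
  assert (0 <= phi*(1-x))%R by (apply Rmult_le_pos; lra).
  assert (phi*(1-x) < phi*(phi-1))%R by (apply Rmult_lt_compat_l; lra).
  assert (phi*(phi-1) = 1)%R by (pose proof phi_sq; nra).
  split; lra.
Qed.

Lemma F_SS n : F (S (S n)) = F (S n) + F n.
Proof. reflexivity. Qed.

Lemma F_pos n : 0 <= F n /\ 1 <= F (S n).
Proof.
  induction n as [|n IH]; [simpl; lia|]. split; [lia|]. rewrite F_SS. lia.
Qed.

Definition s (t n : nat) : Z := F (S t) * a n + F t * Z.of_nat n.
Definition u (t n : nat) : Z := F (S (S t)) * a n + F (S t) * Z.of_nat n.

Lemma s_step t n : s t (S n) = s t n + F (S (S t)) \/
   (s t (S n) = s t n + F (S (S (S t))) /\ a (S n) = a n + 2).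
Proof.
  unfold s. rewrite !F_SS. destruct (a_step n) as [H|H]; rewrite H; [left|right]; split || idtac; lia.
Qed.

Lemma s_step' t n : s t n + F (S (S t)) <= s t (S n) /\ s t (S n) <= s t n + F (S (S (S t))).
Proof.
  pose proof (F_pos t). pose proof (F_pos (S t)). rewrite !F_SS in *.
  destruct (s_step t n) as [E|[E _]]; rewrite E; rewrite ?F_SS in *; lia.
Qed.

Lemma s_mono t n d : s t n + F (S (S t)) * Z.of_nat d <= s t (n + d).
Proof.
  induction d as [|d IH]. - rewrite Nat.add_0_r. lia.
  - rewrite Nat.add_succ_r. pose proof (s_step' t (n + d)). lia.
Qed.

Lemma s_lt t n1 n2 : (n1 < n2)%nat -> s t n1 + F (S (S t)) <= s t n2.
Proof.
  intros H. replace n2 with (n1 + (n2 - n1))%nat by lia.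
  pose proof (s_mono t n1 (n2 - n1)). pose proof (F_pos (S t)). rewrite F_SS in *. nia.
Qed.

Lemma s_le t n1 n2 : (n1 <= n2)%nat -> s t n1 <= s t n2.
Proof.
  intros H. replace n2 with (n1 + (n2 - n1))%nat by lia.
  pose proof (s_mono t n1 (n2 - n1)). pose proof (F_pos (S t)). rewrite F_SS in *. nia.
Qed.

Lemma u_step t n : u t n + F (S (S (S t))) <= u t (S n).
Proof.
  unfold u. rewrite !F_SS. pose proof (F_pos t). pose proof (F_pos (S t)). rewrite F_SS in *.
  destruct (a_step n) as [E|E]; rewrite E; lia.
Qed.

Lemma u_mono t n d : u t n + F (S (S (S t))) * Z.of_nat d <= u t (n + d).
Proof.
  induction d as [|d IH]. - rewrite Nat.add_0_r. lia.
  - rewrite Nat.add_succ_r. pose proof (u_step t (n + d)). lia.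
Qed.

Lemma u_lt t n1 n2 : (n1 < n2)%nat -> u t n1 + F (S (S (S t))) <= u t n2.
Proof.
  intros H. replace n2 with (n1 + (n2 - n1))%nat by lia.
  pose proof (u_mono t n1 (n2 - n1)). pose proof (F_pos (S (S t))). nia.
Qed.

Lemma u_le t n1 n2 : (n1 <= n2)%nat -> u t n1 <= u t n2.
Proof.
  intros H. replace n2 with (n1 + (n2 - n1))%nat by lia.
  pose proof (u_mono t n1 (n2 - n1)). pose proof (F_pos (S (S t))). nia.
Qed.

Lemma s_one t : s t 1 = F (S (S t)).
Proof. unfold s. rewrite a_one, F_SS. simpl. lia. Qed.

Lemma u_one t : u t 1 = F (S (S t)) + F (S t).
Proof. unfold u. rewrite a_one. simpl. lia. Qed.

Lemma gap_link t n' : (1 <= n')%nat ->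
  u t n' = s t (Z.to_nat (a n')) + F (S t) /\
  s t (S (Z.to_nat (a n'))) = s t (Z.to_nat (a n')) + F (S (S (S t))).
Proof.
  intros H. pose proof (a_aa n' H). pose proof (a_aa1 n' H). pose proof (a_nonneg n').
  unfold s, u. rewrite H0, H1. rewrite !F_SS. rewrite Nat2Z.inj_succ, Z2Nat.id by lia. split; lia.
Qed.

Definition covered (t : nat) (m : Z) : Prop :=
  (exists n1, (1 <= n1)%nat /\ F (S t) <= m - s t n1 <= F (S (S (S t))) - 1) \/
  (exists n2, (1 <= n2)%nat /\ F (S (S t)) <= m - u t n2 <= F (S (S (S t))) - 1).

Lemma cover t n : (1 <= n)%nat -> forall m, F (S (S (S t))) <= m < s t n + F (S t) -> covered t m.
Proof.
  induction n as [|n IH]; intros Hn m Hm; [lia|].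
  destruct (Nat.eq_dec n 0) as [->|Hn0].
  - rewrite s_one, (F_SS (S t)) in Hm. lia.
  - destruct (Z_lt_le_dec m (s t n + F (S t))) as [h|h].
    + apply IH; lia.
    + destruct (Z_le_gt_dec m (s t n + F (S (S (S t))) - 1)) as [h2|h2].
      * left. exists n. split; [lia|]. lia.
      * right. pose proof (F_pos t). pose proof (F_pos (S t)).
        destruct (s_step t n) as [E|[E E2]].
        { rewrite E, (F_SS (S t)) in Hm. rewrite (F_SS (S t)) in h2. lia. }
        destruct (a_gap n ltac:(lia) ltac:(lia)) as [n' [Hn' En']].
        destruct (gap_link t n' Hn') as [G1 G2].
        replace (Z.to_nat (a n')) with n in G1, G2 by lia.
        exists n'. split; [lia|]. rewrite G1. rewrite (F_SS (S t)) in *. rewrite E in Hm. lia.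
Qed.

Lemma Rij_s t j m : Rij t j m <-> exists n, (1 <= n)%nat /\ m = s t n - j.
Proof. unfold Rij, f, s. reflexivity. Qed.

Lemma Rij_u t j m : Rij (S t) j m <-> exists n, (1 <= n)%nat /\ m = u t n - j.
Proof. unfold Rij, f, u. reflexivity. Qed.

Theorem corollary3p9 (k : nat) (hk : (3 <= k)%nat) :
  (exists l : list (nat * Z),
      NoDup l /\ (forall p, In p l <-> idx k p) /\ Z.of_nat (length l) = F k) /\
  (forall p q : nat * Z, idx k p -> idx k q -> p <> q ->
      forall m : Z, ~ (Rij (fst p) (snd p) m /\ Rij (fst q) (snd q) m)) /\
  (forall m : Z,
      (exists p : nat * Z, idx k p /\ Rij (fst p) (snd p) m) <->
      (1 <= m /\ F k <= m)).
Proof.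
  destruct k as [|[|[|t]]]; try lia.
  assert (Hidx : forall p, idx (S (S (S t))) p <->
     (fst p = t /\ 1 - F (S (S (S t))) <= snd p <= - F (S t)) \/
     (fst p = S t /\ 1 - F (S (S (S t))) <= snd p <= - F (S (S t)))).
  { intros [i j]. unfold idx. simpl fst. simpl snd.
    replace (S (S (S t)) - 3)%nat with t by lia. replace (S (S (S t)) - 2)%nat with (S t) by lia.
    split. - intros [[->| ->] H]; auto. - intros [[-> H]|[-> H]]; auto. }
  pose proof (F_pos t) as Ft. pose proof (F_pos (S t)) as Ft1. pose proof (F_pos (S (S t))) as Ft2.
  pose proof (F_SS t) as E1. pose proof (F_SS (S t)) as E2.
  set (P := F t) in *. set (Q := F (S t)) in *. set (R := F (S (S t))) in *. set (T := F (S (S (S t)))) in *.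
  split; [|split].
  - set (lA := map (fun i => (t, 1 - T + Z.of_nat i)) (seq 0 (Z.to_nat (T - Q)))).
    set (lB := map (fun i => (S t, 1 - T + Z.of_nat i)) (seq 0 (Z.to_nat (T - R)))).
    exists (lA ++ lB). split; [|split].
    + apply NoDup_app.
      * apply NoDup_map_NoDup_ForallPairs; [|apply seq_NoDup].
        intros x y _ _ H. injection H. lia.
      * apply NoDup_map_NoDup_ForallPairs; [|apply seq_NoDup].
        intros x y _ _ H. injection H. lia.
      * intros p H1 H2. unfold lA, lB in *. apply in_map_iff in H1, H2.
        destruct H1 as [x [<- _]]. destruct H2 as [y [H _]]. injection H. lia.
    + intros [i j]. rewrite Hidx, in_app_iff. unfold lA, lB. rewrite !in_map_iff. simpl fst; simpl snd.
      split.
      * intros [[x [H Hx]]|[x [H Hx]]]; apply in_seq in Hx; apply pair_equal_spec in H; destruct H as [Hi Hj]; [left|right]; (split; [congruence|]); rewrite <- Hj; lia.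
      * intros [[-> H]|[-> H]]; [left|right]; exists (Z.to_nat (j - 1 + T)); rewrite in_seq;
          (split; [f_equal; lia | lia]).
    + unfold lA, lB. rewrite length_app, !length_map, !length_seq. lia.
  - intros [i1 j1] [i2 j2] H1 H2 Hne m [M1 M2]. rewrite Hidx in H1, H2. simpl fst in *; simpl snd in *.
    destruct H1 as [[-> H1]|[-> H1]]; destruct H2 as [[-> H2]|[-> H2]].
    + destruct (proj1 (Rij_s _ _ _) M1) as [n1 [Hn1 M1']]. destruct (proj1 (Rij_s _ _ _) M2) as [n2 [Hn2 M2']]. clear M1 M2.
      destruct (lt_eq_lt_dec n1 n2) as [[h|h]|h].
      * pose proof (s_lt t n1 n2 h). fold R in H. lia.
      * subst. apply Hne. f_equal. lia.
      * pose proof (s_lt t n2 n1 h). fold R in H. lia.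
    + destruct (proj1 (Rij_s _ _ _) M1) as [n1 [Hn1 M1']]. destruct (proj1 (Rij_u _ _ _) M2) as [n2 [Hn2 M2']]. clear M1 M2.
      destruct (gap_link t n2 Hn2) as [G1 G2]. fold Q T in G1, G2.
      set (n := Z.to_nat (a n2)) in *.
      destruct (le_lt_dec n1 n) as [h|h].
      * pose proof (s_le t n1 n h). lia.
      * pose proof (s_le t (S n) n1 h). lia.
    + destruct (proj1 (Rij_u _ _ _) M1) as [n1 [Hn1 M1']]. destruct (proj1 (Rij_s _ _ _) M2) as [n2 [Hn2 M2']]. clear M1 M2.
      destruct (gap_link t n1 Hn1) as [G1 G2]. fold Q T in G1, G2.
      set (n := Z.to_nat (a n1)) in *.
      destruct (le_lt_dec n2 n) as [h|h].
      * pose proof (s_le t n2 n h). lia.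
      * pose proof (s_le t (S n) n2 h). lia.
    + destruct (proj1 (Rij_u _ _ _) M1) as [n1 [Hn1 M1']]. destruct (proj1 (Rij_u _ _ _) M2) as [n2 [Hn2 M2']]. clear M1 M2.
      destruct (lt_eq_lt_dec n1 n2) as [[h|h]|h].
      * pose proof (u_lt t n1 n2 h). fold T in H. lia.
      * subst. apply Hne. f_equal. lia.
      * pose proof (u_lt t n2 n1 h). fold T in H. lia.
  - intros m. split.
    + intros [[i j] [H M]]. rewrite Hidx in H. simpl fst in *; simpl snd in *.
      destruct H as [[-> H]|[-> H]].
      * destruct (proj1 (Rij_s _ _ _) M) as [n [Hn M']]. pose proof (s_le t 1 n Hn). rewrite s_one in H0. fold R in H0. lia.
      * destruct (proj1 (Rij_u _ _ _) M) as [n [Hn M']]. pose proof (u_le t 1 n Hn). rewrite u_one in H0. fold R Q in H0. lia.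
    + intros [Hm1 Hm2].
      assert (Hc : covered t m).
      { apply (cover t (S (Z.to_nat m))); [lia|]. split; [assumption|].
        unfold s. pose proof (a_ge (S (Z.to_nat m))). fold Q P. nia. }
      destruct Hc as [[n [Hn Hc]]|[n [Hn Hc]]].
      * exists (t, s t n - m). rewrite Hidx. simpl fst; simpl snd. split; [left; split; [reflexivity|lia]|].
        apply Rij_s. exists n. split; [assumption|lia].
      * exists (S t, u t n - m). rewrite Hidx. simpl fst; simpl snd. split; [right; split; [reflexivity|lia]|].
        apply Rij_u. exists n. split; [assumption|lia].
Qed.
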